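(* Let $b\ge2$, $d\ge1$ be integers, $\ell\in\mathbb{N}_0$ and $0<\epsilon<b^{-\ell}$. For every $L\in\mathbb{N}$ there exists $q_d\in\mathcal{NN}_{d,1}(2d\,b^{\lceil\ell/L\rceil},L)$ such that for every ${\bf i}\in I_\ell$, \[ q_d(x)=\mathrm{ind}({\bf i}):=\sum_{j=1}^d b^{\ell(j-1)}{\bf i}_j\qquad\text{for all } x\in\Omega^\ell_{{\bf i},\epsilon}. \]
   Context: $\mathcal{NN}_{d,k}(W,L)$: set of maps $g:\mathbb{R}^d\to\mathbb{R}^k$ given by $g_0(x)=x$, $g_{\ell+1}(x)=\sigma(A_\ell g_\ell(x)+b_\ell)$ ($\ell=0,\dots,L-1$), $g(x)=A_Lg_L(x)+b_L$, with $A_\ell\in\mathbb{R}^{N_{\ell+1}\times N_\ell}$, $b_\ell\in\mathbb{R}^{N_{\ell+1}}$, $N_0=d$, $N_{L+1}=k$, $\max\{N_1,\dots,N_L\}\le W$, $\sigma(t)=\max\{t,0\}$ componentwise. Partition with base $b$: for $\ell\in\mathbb{N}_0$, $I_\ell=\{0,\dots,b^\ell-1\}^d$. For ${\bf i}\in I_\ell$ and $\epsilon>0$, $\Omega^\ell_{{\bf i},\epsilon}=\prod_{j=1}^dJ_j$ where $J_j=[b^{-\ell}{\bf i}_j,\,b^{-\ell}({\bf i}_j+1)-\epsilon)$ if ${\bf i}_j<b^\ell-1$ and $J_j=[1-b^{-\ell},1)$ if ${\bf i}_j=b^\ell-1$. *)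

(* Defs.v *)
From HB Require Import structures.
From mathcomp Require Import all_boot all_order all_algebra.
From mathcomp Require Import reals.
Set Implicit Arguments. Unset Strict Implicit. Unset Printing Implicit Defensive.
Import Order.TTheory GRing.Theory Num.Theory.
Local Open Scope ring_scope.

Definition relu {R : realType} (t : R) : R := Num.max t 0.

(* A ReLU network with output dimension k, input dimension n and L hidden layers. *)
Inductive relu_net (R : realType) (k : nat) : nat -> nat -> Type :=
| NOut (n : nat) (A : 'M[R]_(k, n)) (b : 'cV[R]_k) : relu_net R k n 0
| NLayer (n m L : nat) (A : 'M[R]_(m, n)) (b : 'cV[R]_m) (N : relu_net R k m L)
    : relu_net R k n L.+1.

Fixpoint net_width (R : realType) (k n L : nat) (N : relu_net R k n L) : nat :=
  match N with
  | NOut _ _ _ => 0%N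
  | @NLayer _ _ _ m _ _ _ N' => maxn m (net_width N')
  end.

Fixpoint net_eval (R : realType) (k n L : nat) (N : relu_net R k n L)
  : 'cV[R]_n -> 'cV[R]_k :=
  match N with
  | NOut _ A b => fun x => A *m x + b
  | NLayer _ _ _ A b N' => fun x => net_eval N' (map_mx relu (A *m x + b))
  end.

Definition NN (R : realType) (d k W L : nat) : ('cV[R]_d -> 'cV[R]_k) -> Prop :=
  fun g => exists N : relu_net R k d L, (net_width N <= W)%N /\ net_eval N = g.

Definition bpow_inv (R : realType) (b l : nat) : R := ((b ^ l)%N%:R)^-1.

Definition in_Omega (R : realType) (b d l : nat) (i : 'I_d -> nat) (eps : R)
    (x : 'cV[R]_d) : Prop :=
  forall j : 'I_d,
    if (i j < (b ^ l).-1)%N then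
      bpow_inv R b l * (i j)%:R <= x j ord0 /\
      x j ord0 < bpow_inv R b l * (i j).+1%:R - eps
    else 1 - bpow_inv R b l <= x j ord0 /\ x j ord0 < 1.

(* ind(i) = sum_{j=1}^d b^{l(j-1)} i_j  (0-based j here) *)
Definition ind (R : realType) (b d l : nat) (i : 'I_d -> nat) : R :=
  \sum_(j < d) ((b ^ (l * j)) * i j)%N%:R.

(* Main.v *)
Require Import Defs.
From HB Require Import structures.
From mathcomp Require Import all_boot all_order all_algebra.
From mathcomp Require Import reals.
From mathcomp Require Import zify.
From mathcomp.algebra_tactics Require Import ring lra.
Import Order.TTheory GRing.Theory Num.Theory.
Local Open Scope ring_scope.
Lemma relu_pos (R : realType) (t : R) : 0 <= t -> relu t = t.
Proof. by move=> h; rewrite /relu max_l. Qed.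
Lemma relu_neg (R : realType) (t : R) : t <= 0 -> relu t = 0.
Proof. by move=> h; rewrite /relu max_r. Qed.
Lemma step_ok (R : realType) (r rho : R) (i a : nat) : 0 < rho ->
  i%:R <= r -> r <= i%:R + 1 - rho ->
  relu ((r - a%:R + rho) / rho) - relu ((r - a%:R) / rho) = if (a <= i)%N then 1 else 0.
Proof.
move=> hr h1 h2; case: leqP => ha.
  have ha' : (a%:R <= i%:R :> R) by rewrite ler_nat.
  rewrite !relu_pos; first by field; lra.
  - by apply: divr_ge0; lra.
  - by apply: divr_ge0; lra.
have ha' : (i%:R + 1 <= a%:R :> R) by rewrite natr1 ler_nat.
rewrite !relu_neg ?subr0 //.
- by rewrite pmulr_lle0 ?invr_gt0 //; lra.
- by rewrite pmulr_lle0 ?invr_gt0 //; lra.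
Qed.
Lemma sum_pairs (R : realType) (F : nat -> R) (B : nat) :
  \sum_(0 <= c < B.*2) F c = \sum_(0 <= t < B) (F t.*2 + F t.*2.+1).
Proof.
elim: B => [|B IH]; first by rewrite !big_geq.
by rewrite doubleS !big_nat_recr //= IH addrA.
Qed.

Lemma count_le (K B : nat) : (K < B)%N ->
  (\sum_(0 <= t < B) ((0 < t) && (t <= K)))%N = K.
Proof.
move=> hKB.
suff H : forall B, (\sum_(0 <= t < B) ((0 < t) && (t <= K)))%N = minn K B.-1.
  by rewrite H; lia.
elim=> [|B' IH]; first by rewrite big_geq //; lia.
rewrite big_nat_recr //= IH.
case: B' {IH} => [|B'] /=; first by lia.
case: leqP => h /=; lia.
Qed.

Definition cY {R : realType} (rho : R) (c : nat) : R :=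
  if c == 0%N then 1 else if c == 1%N then 0 else rho^-1.
Definition cS {R : realType} (rho : R) (c : nat) : R :=
  if c == 0%N then 0 else if c == 1%N then 1 else - rho^-1.
Definition cC {R : realType} (rho q : R) (c : nat) : R :=
  if (c < 2)%N then 0 else (- ((c./2)%:R * q) + (if odd c then 0 else rho)) / rho.
Definition wt (R : realType) (c : nat) : R :=
  if (c < 2)%N then 0 else if odd c then -1 else 1.
Definition rY (R : realType) (c : nat) : R := if c == 0%N then 1 else 0.
Definition rS {R : realType} (Q : R) (c : nat) : R :=
  (if c == 1%N then 1 else 0) + Q * wt R c.
Definition pre {R : realType} (rho q : R) (c : nat) (Y S : R) : R :=
  cY rho c * Y + cS rho c * S + cC rho q c.

Lemma readY (R : realType) (B q : nat) (rho y s : R) : 0 <= y -> 0 <= s ->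
  \sum_(0 <= c < B.*2) rY R c * relu (pre rho q%:R c y s) = y * (0 < B)%N%:R.
Proof.
move=> hy hs; rewrite sum_pairs.
case: B => [|B]; first by rewrite big_geq // mulr0.
rewrite big_ltn // big_nat_cond big1 /=.
  by rewrite /rY /pre /cY /cS /cC /= relu_pos; lra.
by case=> [|t] //= _; rewrite /rY doubleS /= !mul0r addr0.
Qed.

Lemma readS (R : realType) (B q i : nat) (rho y : R) : 0 < rho -> (0 < q)%N -> (0 < B)%N ->
  i%:R <= y -> y <= i%:R + 1 - rho ->
  \sum_(0 <= c < B.*2) rS q%:R c * relu (pre rho q%:R c y (q * B * (i %/ (q * B)))%N%:R)
  = (q * (i %/ q))%:R.
Proof.
move=> hr hq hB h1 h2.
set s := (q * B * (i %/ (q * B)))%N.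
set i' := (i %% (q * B))%N.
have hs : (s + i' = i)%N by rewrite /s /i' mulnC -divn_eq.
have hi' : (i' < q * B)%N by rewrite /i' ltn_pmod // muln_gt0 hq hB.
rewrite sum_pairs.
have pt : forall t, (rS q%:R t.*2 * relu (pre rho q%:R t.*2 y s%:R) +
     rS q%:R t.*2.+1 * relu (pre rho q%:R t.*2.+1 y s%:R)) =
   (if t == 0%N then s%:R else 0) + q%:R * ((0 < t) && (t <= i' %/ q))%N%:R.
  case=> [|t] /=.
    rewrite /rS /wt /pre /cY /cS /cC /= !mulr0 !addr0 !mul0r add0r mul1r.
    by rewrite add0r mul1r relu_pos // ler0n.
  have -> : t.+1.*2 = t.*2.+2 by rewrite doubleS.
  rewrite /rS /wt /pre /cY /cS /cC /= odd_double half_double /= uphalf_double.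
  rewrite leq_divRL //.
  have := @step_ok R (y - s%:R) rho i' (t.+1 * q)%N hr.
  rewrite natrM.
  have E : i%:R = s%:R + i'%:R :> R by rewrite -natrD hs.
  have E2 : ((t.+1*q <= i')%N%:R : R) = if (t.+1*q <= i')%N then 1 else 0.
    by case: leqP.
  move=> /(_ _ _) H; rewrite E2 -H; [| lra | lra].
  have ->: rho^-1 * y + - rho^-1 * s%:R + (- (t.+1%:R * q%:R) + rho) / rho
     = (y - s%:R - t.+1%:R * q%:R + rho) / rho by field; lra.
  have ->: rho^-1 * y + - rho^-1 * s%:R + (- (t.+1%:R * q%:R) + 0) / rho
     = (y - s%:R - t.+1%:R * q%:R) / rho by field; lra.
  ring.
rewrite (eq_bigr _ (fun t _ => pt t)) big_split /= big_ltn // big_nat_cond big1 /=; last by case=> [|t].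
rewrite addr0.
rewrite -mulr_sumr -natr_sum count_le; last first.
  by rewrite ltn_divLR // mulnC.
rewrite -natrM -natrD; congr (_%:R).
have hsq : s = (q * (B * (i %/ (q*B))))%N by rewrite /s mulnA.
rewrite -hs {2}hsq [(q * (B * _))%N]mulnC divnMDl // mulnDr; congr (_ + _)%N. exact: hsq.
Qed.

Definition dec {d n : nat} (k : 'I_(d * n)) : 'I_d * 'I_n :=
  enum_val (cast_ord (esym (mxvec_cast d n)) k).

Lemma decK (d n : nat) (j : 'I_d) (c : 'I_n) : dec (mxvec_index j c) = (j, c).
Proof. by rewrite /dec /mxvec_index cast_ordK enum_rankK. Qed.

Lemma sum_idx (R : realType) (d n : nat) (F : 'I_(d * n) -> R) :
  \sum_(k < d * n) F k = \sum_(j < d) \sum_(c < n) F (mxvec_index j c).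
Proof.
rewrite pair_big /=.
rewrite (reindex (fun p : 'I_d * 'I_n => mxvec_index p.1 p.2)) //=.
exists (fun k => dec k) => [[j c] _|k _] /=; first by rewrite decK.
by case/mxvec_indexP: k => j c; rewrite decK.
Qed.

Definition Amid (R : realType) (d n : nat) (rho Q : R) : 'M[R]_(d * n, d * n) :=
  \matrix_(k, k') if (dec k').1 == (dec k).1 then
     cY rho (dec k).2 * rY R (dec k').2 + cS rho (dec k).2 * rS Q (dec k').2 else 0.
Definition bmid (R : realType) (d n : nat) (rho q : R) : 'cV[R]_(d * n) :=
  \col_k cC rho q (dec k).2.
Definition Aout (R : realType) (b l d n : nat) : 'M[R]_(1, d * n) :=
  \matrix_(o, k) ((b ^ (l * (dec k).1))%N%:R * rS 1 (dec k).2).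
Definition A1 (R : realType) (d n : nat) (rho lam : R) : 'M[R]_(d * n, d) :=
  \matrix_(k, j) if j == (dec k).1 then cY rho (dec k).2 * lam else 0.
Definition b1 (R : realType) (d n : nat) (rho mu q : R) : 'cV[R]_(d * n) :=
  \col_k (cY rho (dec k).2 * mu + cC rho q (dec k).2).

Fixpoint tailn (R : realType) (b l d B : nat) (rho : R) (k : nat)
  : relu_net R 1 (d * B.*2) k :=
  match k with
  | 0 => @NOut R 1 (d * B.*2) (Aout R b l d B.*2) 0
  | k'.+1 => @NLayer R 1 (d * B.*2) (d * B.*2) k'
       (Amid R d B.*2 rho (B ^ k'.+1)%N%:R) (bmid R d B.*2 rho (B ^ k')%N%:R)
       (tailn R b l d B rho k')
  end.

Lemma tailn_width (R : realType) (b l d B : nat) (rho : R) k :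
  (net_width (tailn R b l d B rho k) <= d * B.*2)%N.
Proof. by elim: k => [|k IH] //=; rewrite geq_max leqnn IH. Qed.

Definition gs (R : realType) (d B : nat) (rho : R) (k : nat) (i : 'I_d -> nat)
  (y : 'I_d -> R) (v : 'cV[R]_(d * B.*2)) : Prop :=
  forall (j : 'I_d) (c : 'I_(B.*2)), v (mxvec_index j c) 0 =
    relu (pre rho (B ^ k)%N%:R c (y j) (B ^ k * B * (i j %/ (B ^ k * B)))%N%:R).

Lemma tailn_ok (R : realType) (b l d B : nat) (rho : R) (i : 'I_d -> nat) (y : 'I_d -> R) :
  0 < rho -> (0 < B)%N ->
  (forall j, (i j)%:R <= y j /\ y j <= (i j)%:R + 1 - rho) ->
  forall k v, gs R d B rho k i y v -> net_eval (tailn R b l d B rho k) v 0 0 = @ind R b d l i.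
Proof.
move=> hr hB hy; elim=> [|k IH] v hv /=.
  rewrite !mxE addr0 sum_idx /ind; apply: eq_bigr => j _.
  under eq_bigr => c _ do rewrite mxE decK hv /= -mulrA.
  rewrite -mulr_sumr [RHS]natrM; congr (_ * _).
  have [h1 h2] := hy j.
  have := @readS R B (B ^ 0) (i j) rho (y j) hr (ltn0Sn 0) hB h1 h2.
  rewrite big_mkord expn0 !mul1n divn1 => <-.
  by apply: eq_bigr => c _.
apply: IH => j c; rewrite !mxE sum_idx.
rewrite (bigD1 j) //= [X in _ + X + _]big1 ?addr0; last first.
  move=> j' /negbTE hj.
  by apply: big1 => c' _; rewrite !mxE !decK /= hj mul0r.
under eq_bigr => c' _ do rewrite !mxE !decK /= eqxx hv mulrDl -!mulrA.
rewrite big_split /= -!mulr_sumr decK /=.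
have [h1 h2] := hy j.
rewrite -(big_mkord xpredT (fun c' => rY R c' * relu (pre rho (B ^ k.+1)%N%:R c' (y j)
               (B ^ k.+1 * B * (i j %/ (B ^ k.+1 * B)))%N%:R))).
rewrite -(big_mkord xpredT (fun c' => rS (B ^ k.+1)%N%:R c' * relu (pre rho (B ^ k.+1)%N%:R c' (y j)
               (B ^ k.+1 * B * (i j %/ (B ^ k.+1 * B)))%N%:R))).
rewrite readY; last 2 first.
- apply: le_trans h1; exact: ler0n.
- exact: ler0n.
rewrite readS // ?expn_gt0 ?hB // -expnSr.
by rewrite /= mulr1n mulr1 /pre.
Qed.

Lemma omega_bound (R : realType) (b l i : nat) (eps x : R) :
  (0 < b)%N -> 0 < eps -> eps < bpow_inv R b l -> (i < b ^ l)%N ->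
  (if (i < (b ^ l).-1)%N then
      bpow_inv R b l * i%:R <= x /\ x < bpow_inv R b l * i.+1%:R - eps
   else 1 - bpow_inv R b l <= x /\ x < 1) ->
  i%:R <= (1 - eps / 2) * (b ^ l)%N%:R * x + ((b ^ l)%N%:R - 1) * (eps / 2) /\
  (1 - eps / 2) * (b ^ l)%N%:R * x + ((b ^ l)%N%:R - 1) * (eps / 2) <= i%:R + 1 - eps / 2.
Proof.
move=> hb he heps hi.
set N : R := (b ^ l)%N%:R.
have hNn : (0 < b ^ l)%N by rewrite expn_gt0 hb.
have hN1 : 1 <= N by rewrite /N ler1n.
have hN : 0 < N by lra.
have hNN : N * bpow_inv R b l = 1 by rewrite /bpow_inv -/N mulfV // gt_eqF.
have heN : eps * N < 1.
  by rewrite -hNN mulrC ltr_pM2l.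
rewrite -mulrA.
case: ifP => hc [h1 h2].
  have l1 : i%:R <= N * x.
    by apply: le_trans (ler_wpM2l (ltW hN) h1); rewrite mulrA hNN mul1r.
  have l2 : N * x < i.+1%:R - eps * N.
    rewrite -(ltr_pM2l hN) in h2.
    by move: h2; rewrite mulrBr mulrA hNN mul1r [N * eps]mulrC.
  have hiN : i.+2%:R <= N.
    rewrite /N ler_nat; move: hc hNn; case: (b ^ l)%N => //= n _; lia.
  rewrite -natr1 in l2; rewrite -!natr1 in hiN.
  move: (N * x) l1 l2 => x' l1 l2.
  have he1 : eps < 1 by nra.
  have eN0 : 0 < eps * N by apply: mulr_gt0.
  have p4 : 0 <= i%:R :> R by rewrite ler0n.
  have q1 : 0 <= N - 1 - x' by lra.
  have q2 : 0 <= 1 - eps / 2 by lra.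
  have q3 : 0 <= i%:R + 1 - eps * N - x' by lra.
  have q4 : 0 <= N + i%:R + 1 - eps * N by lra.
  have p1 := mulr_ge0 (ltW he) q1.
  have p2 := mulr_ge0 q2 q3.
  have p3 := mulr_ge0 (ltW he) q4.
  split; nra.
have hieq : i%:R = N - 1.
  rewrite /N; have -> : (b ^ l)%N = i.+1.
    move: hc hi; case: (b ^ l)%N => //= n; lia.
  by rewrite -natr1 addrK.
have l1 : N - 1 <= N * x.
  by have := h1; rewrite -(ler_pM2l hN) mulrBr mulr1 hNN.
have l2 : N * x < N.
  by rewrite -[X in _ < X]mulr1 ltr_pM2l.
move: (N * x) l1 l2 => x' l1 l2.
have he1 : eps < 1 by nra.
have q2 : 0 <= 1 - eps / 2 by lra.
have q1 : 0 <= x' - (N - 1) by lra.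
have q3 : 0 <= N - x' by lra.
have p1 := mulr_ge0 q2 q1.
have p2 := mulr_ge0 q2 q3.
rewrite hieq; split; nra.
Qed.

Theorem mainTheorem6 (R : realType) (b d l : nat) (eps : R) :
  (2 <= b)%N -> (1 <= d)%N -> 0 < eps -> eps < bpow_inv R b l ->
  forall L : nat, (1 <= L)%N ->
  exists q : 'cV[R]_d -> 'cV[R]_1,
    @NN R d 1 (2 * d * b ^ ((l + L.-1) %/ L))%N L q /\
    forall i : 'I_d -> nat, (forall j, i j < b ^ l)%N ->
      forall x : 'cV[R]_d, @in_Omega R b d l i eps x -> q x ord0 ord0 = @ind R b d l i.
Proof.
move=> hb hd he heps L hL.
case: L hL => [//|L'] _.
rewrite [L'.+1.-1]/=.
set m := ((l + L') %/ L'.+1)%N.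
set B := (b ^ m)%N.
have hb0 : (0 < b)%N by lia.
have hB : (0 < B)%N by rewrite /B expn_gt0 hb0.
set N : R := (b ^ l)%N%:R.
set rho : R := eps / 2.
set lam : R := (1 - eps / 2) * N.
set mu : R := (N - 1) * (eps / 2).
set net := @NLayer R 1 d (d * B.*2) L' (A1 R d B.*2 rho lam)
   (b1 R d B.*2 rho mu (B ^ L')%N%:R) (tailn R b l d B rho L').
exists (net_eval net); split.
  exists net; split => //=.
  by rewrite geq_max (leq_trans (tailn_width _ _ _ _ _ _ _)) ?andbT; rewrite -mul2n mulnCA mulnA.

move=> i hi x hx.
have hml : (l <= m * L'.+1)%N.
  have e := divn_eq (l + L') L'.+1.
  have r := ltn_pmod (l + L') (ltn0Sn L').
  move: e r; rewrite -/m; set r0 := ((l + L') %% L'.+1)%N; set P := (m * L'.+1)%N.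
  lia.
have hBL : (b ^ l <= B ^ L'.+1)%N.
  by rewrite /B -expnM leq_pexp2l.
have hrho : 0 < rho by rewrite /rho; lra.
rewrite /net /=.
apply: (@tailn_ok R b l d B rho i (fun j => lam * x j 0 + mu)) => //.
  move=> j; have := @omega_bound R b l (i j) eps (x j 0) hb0 he heps (hi j) (hx j).
  by rewrite /lam /mu /rho -mulrA.
move=> j c; rewrite !mxE (bigD1 j) //= [X in _ + X + _]big1 ?addr0; last first.
  by move=> j' /negbTE hj; rewrite !mxE decK /= hj mul0r.
rewrite !mxE decK /= eqxx -expnSr divn_small; last first.
  exact: leq_trans (hi j) hBL.
rewrite muln0 /pre mulr0 addr0; congr relu; ring.
Qed.
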